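(* Let $G_1,\dots,G_n$ be non-trivial, pairwise non-isomorphic, centreless, directly indecomposable groups, let $r_1,\dots,r_n$ be positive integers and $G=G_1^{r_1}\times\cdots\times G_n^{r_n}$. Then $$\operatorname{Spec}_R(G)=\prod_{i=1}^n\left(\bigcup_{j=1}^{r_i}\operatorname{Spec}_R(G_i)^{(j)}\right).$$ In particular, $G$ has the $R_\infty$-property if and only if $G_i$ has the $R_\infty$-property for some $i$.
   Context: A group $A$ is directly indecomposable if $A\cong B\times C$ implies $B=1$ or $C=1$. $R(\psi)$ is the Reidemeister number of an endomorphism $\psi$ of $A$ (number of classes of $x\sim gx\psi(g)^{-1}$), $\operatorname{Spec}_R(A)=\{R(\psi)\mid\psi\in\operatorname{Aut}(A)\}$, and $A$ has the $R_\infty$-property if $\operatorname{Spec}_R(A)=\{\infty\}$. For $S_1,\dots,S_m\subseteq\mathbb{N}\cup\{\infty\}$, $\prod_i S_i=\{s_1\cdots s_m\mid s_i\in S_i\}$, $S^{(j)}$ is the $j$-fold product of $S$ with itself, with convention $a\cdot\infty=\infty$. *)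

(* Defs.v *)
From HB Require Import structures.
From mathcomp Require Import all_boot.

Set Implicit Arguments.
Unset Strict Implicit.
Unset Printing Implicit Defensive.

Definition is_hom (A B : groupType) (f : A -> B) : Prop :=
  forall x y : A, f (mul x y) = mul (f x) (f y).

Definition is_iso (A B : groupType) (f : A -> B) : Prop :=
  is_hom f /\ bijective f.

Definition isomorphic (A B : groupType) : Prop :=
  exists f : A -> B, is_iso f.

Definition is_aut (A : groupType) (f : A -> A) : Prop := is_iso f.

Definition trivial_group (A : groupType) : Prop := forall x : A, x = one.

Definition centreless (A : groupType) : Prop :=
  forall z : A, (forall x : A, mul z x = mul x z) -> z = one.

Definition gprod (B C : groupType) : Type := (B * C)%type.
HB.instance Definition _ (B C : groupType) := Choice.on (gprod B C).

Section GProd.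
Variables B C : groupType.
Definition gprod_one : gprod B C := (one, one).
Definition gprod_inv (x : gprod B C) : gprod B C := (inv x.1, inv x.2).
Definition gprod_mul (x y : gprod B C) : gprod B C :=
  (mul x.1 y.1, mul x.2 y.2).
Fact gprod_mulA : associative gprod_mul.
Proof. by move=> [? ?] [? ?] [? ?]; rewrite /gprod_mul /= !mulgA. Qed.
Fact gprod_mul1 : left_id gprod_one gprod_mul.
Proof. by move=> [? ?]; rewrite /gprod_mul /= !mul1g. Qed.
Fact gprod_mulg1 : right_id gprod_one gprod_mul.
Proof. by move=> [? ?]; rewrite /gprod_mul /= !mulg1. Qed.
Fact gprod_mulV : left_inverse gprod_one gprod_inv gprod_mul.
Proof. by move=> [? ?]; rewrite /gprod_mul /= !mulVg. Qed.
Fact gprod_mulgV : right_inverse gprod_one gprod_inv gprod_mul.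
Proof. by move=> [? ?]; rewrite /gprod_mul /= !mulgV. Qed.
End GProd.

HB.instance Definition _ (B C : groupType) :=
  isGroup.Build (gprod B C) (@gprod_mulA B C) (@gprod_mul1 B C)
    (@gprod_mulg1 B C) (@gprod_mulV B C) (@gprod_mulgV B C).

Definition directly_indecomposable (A : groupType) : Prop :=
  forall B C : groupType, isomorphic A (gprod B C) ->
    trivial_group B \/ trivial_group C.

Definition dprodG (I : finType) (F : I -> groupType) : Type :=
  {dffun forall i : I, F i}.
HB.instance Definition _ (I : finType) (F : I -> groupType) :=
  Choice.on (dprodG F).

Section DProd.
Variables (I : finType) (F : I -> groupType).
Definition dprod_one : dprodG F := [ffun i => one].
Definition dprod_inv (x : dprodG F) : dprodG F := [ffun i => inv (x i)].
Definition dprod_mul (x y : dprodG F) : dprodG F := [ffun i => mul (x i) (y i)].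
Fact dprod_mulA : associative dprod_mul.
Proof. by move=> x y z; apply/ffunP => i; rewrite !ffunE mulgA. Qed.
Fact dprod_mul1 : left_id dprod_one dprod_mul.
Proof. by move=> x; apply/ffunP => i; rewrite !ffunE mul1g. Qed.
Fact dprod_mulg1 : right_id dprod_one dprod_mul.
Proof. by move=> x; apply/ffunP => i; rewrite !ffunE mulg1. Qed.
Fact dprod_mulV : left_inverse dprod_one dprod_inv dprod_mul.
Proof. by move=> x; apply/ffunP => i; rewrite !ffunE mulVg. Qed.
Fact dprod_mulgV : right_inverse dprod_one dprod_inv dprod_mul.
Proof. by move=> x; apply/ffunP => i; rewrite !ffunE mulgV. Qed.
End DProd.

HB.instance Definition _ (I : finType) (F : I -> groupType) :=
  isGroup.Build (dprodG F) (@dprod_mulA I F) (@dprod_mul1 I F)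
    (@dprod_mulg1 I F) (@dprod_mulV I F) (@dprod_mulgV I F).

(* G_1^{r_1} x ... x G_n^{r_n}: the direct product of the family
   indexed by pairs (i, j), i < n, j < r_i, whose (i,j)-factor is G_i *)
Definition powprodG (n : nat) (G : 'I_n -> groupType) (r : 'I_n -> nat)
  : groupType :=
  dprodG (fun k : {i : 'I_n & 'I_(r i)} => G (tag k)).

Inductive enat := Fin of nat | Inf.

(* multiplication with the convention a * oo = oo * a = oo *)
Definition enat_mul (a b : enat) : enat :=
  match a, b with
  | Fin x, Fin y => Fin (x * y)
  | _, _ => Inf
  end.

Definition twisted_conj (A : groupType) (psi : A -> A) (x y : A) : Prop :=
  exists g : A, y = mul (mul g x) (inv (psi g)).

Definition has_n_classes (T : Type) (R : T -> T -> Prop) (n : nat) : Prop :=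
  exists c : T -> 'I_n,
    (forall k : 'I_n, exists x, c x = k) /\ (forall x y, c x = c y <-> R x y).

Definition reidemeister_number_is (A : groupType) (psi : A -> A) (k : enat)
  : Prop :=
  match k with
  | Fin n => has_n_classes (twisted_conj psi) n
  | Inf => forall n, ~ has_n_classes (twisted_conj psi) n
  end.

Definition enat_set := enat -> Prop.

Definition SpecR (A : groupType) : enat_set :=
  fun k => exists psi : A -> A, is_aut psi /\ reidemeister_number_is psi k.

Definition R_infinity (A : groupType) : Prop :=
  forall k, SpecR A k <-> k = Inf.

Definition set_prod (S T : enat_set) : enat_set :=
  fun k => exists a b, S a /\ T b /\ k = enat_mul a b.

Definition set_one : enat_set := fun k => k = Fin 1.

Fixpoint set_pow (S : enat_set) (j : nat) : enat_set :=
  match j with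
  | 0 => set_one
  | j'.+1 => set_prod S (set_pow S j')
  end.

Definition big_set_prod (I : Type) (s : seq I) (F : I -> enat_set) : enat_set :=
  foldr (fun i acc => set_prod (F i) acc) set_one s.

(* Main.v *)
Require Import Defs.
From HB Require Import structures.
From mathcomp Require Import all_boot.
From Stdlib Require Import Classical ClassicalEpsilon FunctionalExtensionality.
Set Implicit Arguments. Unset Strict Implicit. Unset Printing Implicit Defensive.

Definition cid := constructive_indefinite_description.

Section Hom.
Local Open Scope group_scope.
Variables (A B : groupType) (f : A -> B) (hf : is_hom f).
Lemma hom1 : f 1 = 1.
Proof. apply: (mulgI (f 1)); by rewrite -hf !mulg1. Qed.
Lemma homV x : f x^-1 = (f x)^-1.
Proof. apply: (mulgI (f x)); by rewrite -hf !mulgV hom1. Qed.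
End Hom.

Lemma hom_comp (A B C : groupType) (f : A -> B) (g : B -> C) :
  is_hom f -> is_hom g -> is_hom (g \o f).
Proof. by move=> hf hg x y /=; rewrite hf hg. Qed.

Lemma iso_comp (A B C : groupType) (f : A -> B) (g : B -> C) :
  is_iso f -> is_iso g -> is_iso (g \o f).
Proof.
by move=> [hf bf] [hg bg]; split; [exact: hom_comp | exact: bij_comp].
Qed.

Lemma iso_id (A : groupType) : is_iso (@id A).
Proof. by split => //; exists id. Qed.

Section TW.
Local Open Scope group_scope.
Variables (A : groupType) (psi : A -> A) (hp : is_hom psi).
Lemma tw_refl x : twisted_conj psi x x.
Proof. by exists 1; rewrite (hom1 hp) invg1 mulg1 mul1g. Qed.
Lemma tw_sym x y : twisted_conj psi x y -> twisted_conj psi y x.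
Proof.
case=> g ->; exists g^-1; rewrite (homV hp) invgK !mulgA mulVg mul1g.
by rewrite mulgVK.
Qed.
Lemma tw_trans x y z : twisted_conj psi x y -> twisted_conj psi y z ->
  twisted_conj psi x z.
Proof.
case=> g -> [h ->]; exists (h * g); rewrite hp invgM !mulgA; done.
Qed.
End TW.

Lemma hnc_transfer (T1 T2 : Type) (R1 : T1 -> T1 -> Prop) (R2 : T2 -> T2 -> Prop)
  (f : T1 -> T2) :
  (forall y, exists x, f x = y) -> (forall x y, R1 x y <-> R2 (f x) (f y)) ->
  forall n, has_n_classes R1 n <-> has_n_classes R2 n.
Proof.
move=> fs fR n; pose g y := proj1_sig (cid (fs y)).
have gK y : f (g y) = y by rewrite /g; case: (cid _).
split.
- case=> c [cs cR]; exists (fun y => c (g y)); split.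
  + move=> k; have [x <-] := cs k; exists (f x).
    by apply/cR; apply/fR; rewrite gK; apply/fR; apply/cR.
  + move=> x y; rewrite cR fR !gK; done.
- case=> c [cs cR]; exists (fun x => c (f x)); split.
  + move=> k; have [y <-] := cs k; exists (g y); by rewrite gK.
  + move=> x y; rewrite cR fR; done.
Qed.

Lemma hnc_of_fin (T : Type) (R : T -> T -> Prop) (F : finType) (d : T -> F) :
  (forall y, exists x, d x = y) -> (forall x y, d x = d y <-> R x y) ->
  has_n_classes R #|F|.
Proof.
move=> ds dR; exists (fun x => enum_rank (d x)); split.
- move=> k; have [x dx] := ds (enum_val k); exists x; by rewrite dx enum_valK.
- move=> x y; rewrite -dR; split; [exact: enum_rank_inj | by move->].
Qed.

Definition pb (T : Type) (P : T -> Prop) : pred T :=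
  fun x => if excluded_middle_informative (P x) then true else false.
Lemma pbP (T : Type) (P : T -> Prop) x : pb P x <-> P x.
Proof. by rewrite /pb; case: excluded_middle_informative. Qed.

Lemma hnc_of_inj (T : Type) (R : T -> T -> Prop) (F : finType) (d : T -> F) :
  (forall x y, d x = d y <-> R x y) -> exists m, has_n_classes R m.
Proof.
move=> dR.
pose P := pb (fun y => exists x, d x = y).
have Pd x : P (d x) by apply/pbP; exists x.
pose d' x : {y : F | P y} := exist _ (d x) (Pd x).
exists #|{: {y : F | P y}}|; apply: (@hnc_of_fin _ _ _ d').
- case=> y Py; have [x dx] := (pbP _ _).1 Py; exists x; apply: val_inj => /=; done.
- move=> x y; rewrite -dR; split; [by move/(congr1 val) | by move=> e; apply: val_inj].
Qed.

Lemma hnc_unique (T : Type) (R : T -> T -> Prop) n m :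
  has_n_classes R n -> has_n_classes R m -> n = m.
Proof.
have H: forall n m, has_n_classes R n -> has_n_classes R m -> n <= m.
  move=> {}n {}m [c [cs cR]] [c' [cs' cR']].
  pose pre k := proj1_sig (cid (cs k)).
  have preK k : c (pre k) = k by rewrite /pre; case: (cid _).
  have hi : injective (fun k => c' (pre k)).
    move=> a b /cR' /cR; by rewrite !preK.
  by have := leq_card _ hi; rewrite !card_ord.
by move=> h1 h2; apply/eqP; rewrite eqn_leq !(H _ _ h1 h2, H _ _ h2 h1).
Qed.

Lemma rn_unique (A : groupType) (psi : A -> A) a b :
  reidemeister_number_is psi a -> reidemeister_number_is psi b -> a = b.
Proof.
case: a => [n|]; case: b => [m|] //=.
- by move=> h1 h2; rewrite (hnc_unique h1 h2).
- by move=> h1 h2; case: (h2 n).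
- by move=> h1 h2; case: (h1 m).
Qed.

Lemma rn_exists (A : groupType) (psi : A -> A) :
  exists k, reidemeister_number_is psi k.
Proof.
case: (classic (exists n, has_n_classes (twisted_conj psi) n)) => [[n h]|h].
- by exists (Fin n).
- exists Inf => n hn; apply: h; by exists n.
Qed.

Lemma rn_transfer (A B : groupType) (psi : A -> A) (chi : B -> B) (f : A -> B) :
  (forall y, exists x, f x = y) ->
  (forall x y, twisted_conj psi x y <-> twisted_conj chi (f x) (f y)) ->
  forall k, reidemeister_number_is psi k <-> reidemeister_number_is chi k.
Proof.
move=> fs fR [n|] /=; first exact: hnc_transfer fs fR n.
split=> h m hm; apply: (h m); by apply/(hnc_transfer fs fR).
Qed.

Section Conj.
Local Open Scope group_scope.
Lemma rn_conj (A B : groupType) (psi : A -> A) (chi : B -> B) (th : A -> B) :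
  is_iso th -> (forall x, th (psi x) = chi (th x)) ->
  forall k, reidemeister_number_is psi k <-> reidemeister_number_is chi k.
Proof.
move=> [hth [thi thK thiK]] eq; apply: (rn_transfer (f := th)).
  by move=> y; exists (thi y).
move=> x y; split.
- case=> g ->; exists (th g); by rewrite !hth (homV hth) eq.
- case=> h e; exists (thi h); apply: (can_inj thK).
  by rewrite !hth (homV hth) eq thiK -e.
Qed.
End Conj.

Section DP.
Local Open Scope group_scope.
Variables (I : finType) (A : I -> groupType).
Implicit Types x y : dprodG A.
Lemma dpmulE x y i : (x * y) i = x i * y i.
Proof. by rewrite /= ffunE. Qed.
Lemma dpinvE x i : (x^-1) i = (x i)^-1.
Proof. by rewrite /= ffunE. Qed.
Lemma dponeE i : (1 : dprodG A) i = 1.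
Proof. by rewrite /= ffunE. Qed.

Definition ein (k : I) (a : A k) : dprodG A :=
  [ffun l => if @eqP _ k l is ReflectT e then eq_rect k A a l e else 1].
Lemma ein_at k (a : A k) : ein a k = a.
Proof. rewrite ffunE; case: eqP => // e; by rewrite (eq_axiomK e). Qed.
Lemma ein_off k (a : A k) l : k != l -> ein a l = 1.
Proof. by move=> ne; rewrite ffunE; case: eqP => // e; rewrite e eqxx in ne. Qed.
Lemma ein_hom k : is_hom (@ein k).
Proof.
move=> a b; apply/ffunP => l; rewrite dpmulE.
case: (eqVneq k l) => [<-|ne]; first by rewrite !ein_at.
by rewrite !ein_off // mulg1.
Qed.
Lemma ein_inj k : injective (@ein k).
Proof. by move=> a b /(congr1 (fun x => x k)); rewrite !ein_at. Qed.

Lemma proj_surj k (a : A k) : exists x : dprodG A, x k = a.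
Proof. by exists (ein a); rewrite ein_at. Qed.

Variable psi : forall i, A i -> A i.
Arguments psi : clear implicits.
Definition prodmap (x : dprodG A) : dprodG A := @finfun I A (fun i => psi i (x i)).

Lemma prodmap_hom : (forall i, is_hom (psi i)) -> is_hom prodmap.
Proof.
move=> h x y; apply/ffunP => i; by rewrite /prodmap dpmulE !ffunE h.
Qed.

Lemma prodmap_iso : (forall i, is_iso (psi i)) -> is_iso prodmap.
Proof.
move=> h; split; first by apply: prodmap_hom => i; case: (h i).
have hi i : {g : A i -> A i | cancel (psi i) g /\ cancel g (psi i)}.
  apply: cid; case: (h i) => _ [g g1 g2]; by exists g.
exists (fun y => @finfun I A (fun i => proj1_sig (hi i) (y i)) : dprodG A).
- move=> x; apply/ffunP => i; rewrite /prodmap !ffunE; case: (hi i) => g [g1 g2] /=; exact: g1.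
- move=> x; apply/ffunP => i; rewrite /prodmap !ffunE; case: (hi i) => g [g1 g2] /=; exact: g2.
Qed.

Lemma tw_prod : forall x y, twisted_conj prodmap x y <->
  forall i, twisted_conj (psi i) (x i) (y i).
Proof.
move=> x y; split.
- case=> g -> i; exists (g i); by rewrite /prodmap !dpmulE dpinvE ffunE.
- move=> h; pose g := @finfun I A (fun i => proj1_sig (cid (h i))) : dprodG A.
  exists g; apply/ffunP => i; rewrite /prodmap !dpmulE dpinvE !ffunE.
  by case: (cid (h i)).
Qed.
End DP.

Definition emul_list (I : Type) (s : seq I) (f : I -> enat) : enat :=
  foldr (fun i acc => enat_mul (f i) acc) (Fin 1) s.

Lemma emul_list_Inf (I : eqType) (s : seq I) f i0 :
  i0 \in s -> f i0 = Inf -> emul_list s f = Inf.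
Proof.
elim: s => //= a s IH; rewrite in_cons => /orP [/eqP <-|hs] hf.
  by rewrite hf.
by rewrite IH //; case: (f a).
Qed.

Lemma emul_list_Fin (I : Type) (s : seq I) (n : I -> nat) :
  emul_list s (fun i => Fin (n i)) = Fin (foldr muln 1 (map n s)).
Proof. by elim: s => //= a s ->. Qed.

Section ProdRN.
Local Open Scope group_scope.
Variables (I : finType) (A : I -> groupType) (psi : forall i, A i -> A i).
Arguments psi : clear implicits.
Hypothesis hpsi : forall i, is_hom (psi i).
Arguments hpsi : clear implicits.

Lemma rn_prod (k : I -> enat) :
  (forall i, reidemeister_number_is (psi i) (k i)) ->
  reidemeister_number_is (prodmap psi) (emul_list (enum I) k).
Proof.
move=> hk.
case: (classic (exists i0, k i0 = Inf)) => [[i0 hi0]|hfin].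
- rewrite (emul_list_Inf (i0:=i0)) ?mem_enum //= => m [c [cs cR]].
  (* A i0 would have finitely many classes *)
  have := hk i0; rewrite hi0 /= => hinf.
  pose d (a : A i0) : {set 'I_m} :=
    [set t | pb (fun t => exists x : dprodG A, c x = t /\
                       twisted_conj (psi i0) (x i0) a) t].
  have [m' hm'] : exists m', has_n_classes (twisted_conj (psi i0)) m'.
    apply: (@hnc_of_inj _ _ _ d) => a b; split.
    + move=> e; have [x xa] := proj_surj a.
      have : c x \in d a.
        rewrite inE; apply/pbP; exists x; split => //; rewrite xa; exact: tw_refl.
      rewrite e inE => /pbP [x' [/cR/tw_prod/(_ i0) h1 h2]].
      rewrite -xa; apply: (tw_trans (hpsi i0)) h2; exact: (tw_sym (hpsi i0)).
    + move=> hab; apply/setP => t; rewrite !inE; apply/idP/idP => /pbP [x [h1 h2]];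
        apply/pbP; exists x; split => //.
      * exact: (tw_trans (hpsi i0) h2).
      * apply: (tw_trans (hpsi i0) h2); exact: (tw_sym (hpsi i0)).
  exact: (hinf m').
- have hn i : {n : nat | k i = Fin n}.
    apply: cid; case E: (k i) => [n|]; first by exists n.
    by case: hfin; exists i.
  pose n i := proj1_sig (hn i).
  have kn i : k i = Fin (n i) by rewrite /n; case: (hn i).
  have hc i : {c : A i -> 'I_(n i) | (forall t, exists x, c x = t) /\
     (forall x y, c x = c y <-> twisted_conj (psi i) x y)}.
    apply: cid; have := hk i; rewrite kn /=; case=> c [cs cR]; by exists c.
  pose d (x : dprodG A) : {dffun forall i, 'I_(n i)} :=
    @finfun I (fun i => 'I_(n i)) (fun i => proj1_sig (hc i) (x i)).
  have -> : emul_list (enum I) k = Fin #|{dffun forall i, 'I_(n i)}|.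
    rewrite card_dep_ffun.
    have -> : emul_list (enum I) k = emul_list (enum I) (fun i => Fin (n i)).
      by rewrite /emul_list; elim: (enum I) => //= a s ->; rewrite kn.
    rewrite emul_list_Fin; congr Fin; congr foldr.
    by apply: eq_map => i; rewrite card_ord.
  apply: (@hnc_of_fin _ _ _ d).
  + move=> t.
    have hx i : {a : A i | proj1_sig (hc i) a = t i}.
      apply: cid; case: (hc i) => c [cs _] /=; exact: cs.
    exists (@finfun I A (fun i => proj1_sig (hx i)) : dprodG A); apply/ffunP => i.
    by rewrite !ffunE; case: (hx i).
  + move=> x y; rewrite tw_prod; split.
    * move=> e i; move/ffunP: e => /(_ i); rewrite /d !ffunE.
      by case: (hc i) => c [_ cR] /= /cR.
    * move=> h; apply/ffunP => i; rewrite /d !ffunE.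
      by case: (hc i) => c [_ cR] /=; apply/cR.
Qed.
End ProdRN.

Lemma set_pow_list (S : enat_set) (I : Type) (s : seq I) (f : I -> enat) :
  (forall i, List.In i s -> S (f i)) -> set_pow S (size s) (emul_list s f).
Proof.
elim: s => [_|a s IH] /=; first by [].
move=> h; exists (f a), (emul_list s f); split; first by apply: h; left.
split=> //; apply: IH => i hi; apply: h; by right.
Qed.

Lemma set_pow_fun (S : enat_set) j k : set_pow S j k ->
  exists f : 'I_j -> enat, (forall t, S (f t)) /\ k = emul_list (enum 'I_j) f.
Proof.
elim: j k => [|j IH] k /=.
  move=> ->; exists (fun t => Fin 1); split; first by case.
  by rewrite enum_ord0.
case=> a [b [Sa [hb ->]]]; have [f [Sf ->]] := IH _ hb.
exists (fun t => if unlift ord0 t is Some t' then f t' else a); split.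
  by move=> t; case: (unlift ord0 t).
rewrite enum_ordSl /= unlift_none; congr enat_mul.
rewrite /emul_list foldr_map.
by elim: (enum 'I_j) => //= t s ->; rewrite liftK.
Qed.

Section Homog.
Local Open Scope group_scope.
Variable H : groupType.
Definition hP (K : finType) := dprodG (fun _ : K => H).
Definition hmap (K : finType) (tau : K -> K) (phi : K -> H -> H) (x : hP K) : hP K :=
  @finfun K (fun _ => H) (fun l => phi l (x (tau l))).

Lemma hmapE (K : finType) tau phi (x : hP K) l : hmap tau phi x l = phi l (x (tau l)).
Proof. by rewrite /hmap ffunE. Qed.

Lemma hmap_hom (K : finType) tau (phi : K -> H -> H) :
  (forall l, is_hom (phi l)) -> is_hom (hmap tau phi).
Proof. by move=> h x y; apply/ffunP => l; rewrite dpmulE !hmapE dpmulE h. Qed.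

Lemma hmap_iso (K : finType) (tau : K -> K) (phi : K -> H -> H) :
  injective tau -> (forall l, is_iso (phi l)) -> is_iso (hmap tau phi).
Proof.
move=> ti h; split; first by apply: hmap_hom => l; case: (h l).
have [ti' t1 t2] := injF_bij ti.
have hi l : {g : H -> H | cancel (phi l) g /\ cancel g (phi l)}.
  apply: cid; case: (h l) => _ [g g1 g2]; by exists g.
exists (fun y : hP K => (@finfun K (fun _ => H) (fun l => proj1_sig (hi (ti' l)) (y (ti' l))) : hP K)).
- move=> x; apply/ffunP => l; rewrite ffunE hmapE t2.
  by case: (hi _) => g [g1 g2].
- move=> x; apply/ffunP => l; rewrite hmapE ffunE t1.
  by case: (hi _) => g [g1 g2].
Qed.

Lemma hmap_fixed (K : finType) (tau : K -> K) (phi : K -> H -> H) :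
  (forall l, is_iso (phi l)) -> (forall l, tau l = l) ->
  exists k, set_pow (SpecR H) #|K| k /\ reidemeister_number_is (hmap tau phi) k.
Proof.
move=> hphi tl.
have e : hmap tau phi = prodmap (A := fun _ : K => H) phi.
  apply: functional_extensionality => x; apply/ffunP => l.
  by rewrite hmapE /prodmap ffunE tl.
have hk l : {k | reidemeister_number_is (phi l) k} by apply: cid; apply: rn_exists.
pose kk l := proj1_sig (hk l).
exists (emul_list (enum K) kk); split.
- rewrite cardE; apply: set_pow_list => l _; rewrite /SpecR; exists (phi l); split; first exact: hphi.
  by rewrite /kk; case: (hk l).
- rewrite e; apply: rn_prod => [l|l]; first by case: (hphi l).
  by rewrite /kk; case: (hk l).
Qed.

Section Contract.
Variables (K : finType) (tau : K -> K) (phi : K -> H -> H) (k : K).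
Hypotheses (ti : injective tau) (hphi : forall l, is_hom (phi l)) (nk : tau k != k).
Definition K' := {l : K | l != k}.
Definition tk : K' := exist _ (tau k) nk.
Definition tau' (l : K') : K' :=
  insubd tk (if tau (val l) == k then tau k else tau (val l)).
Lemma tau'E l : val (tau' l) = if tau (val l) == k then tau k else tau (val l).
Proof. by rewrite /tau' insubdK //; case: ifP => // /negbT. Qed.
Definition phi' (l : K') : H -> H :=
  if tau (val l) == k then phi (val l) \o phi k else phi (val l).
Definition rho (x : hP K) : hP K' :=
  @finfun K' (fun _ => H) (fun l => if tau (val l) == k then x (val l) * phi (val l) (x k)
                             else x (val l)).
Lemma rhoE x l : rho x l = if tau (val l) == k then x (val l) * phi (val l) (x k)
                             else x (val l).
Proof. by rewrite ffunE. Qed.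

Lemma tau'_inj : injective tau'.
Proof.
move=> [va na] [vb nb] /(congr1 val); rewrite !tau'E /=.
case: ifP => /eqP ea; case: ifP => /eqP eb.
- by move=> _; apply: val_inj; apply: ti; rewrite /= ea eb.
- by move/ti => e; exfalso; move: nb; rewrite -e eqxx.
- by move/ti => e; exfalso; move: na; rewrite e eqxx.
- by move/ti => e; apply: val_inj.
Qed.

Lemma phi'_iso : (forall l, is_iso (phi l)) -> forall l, is_iso (phi' l).
Proof. move=> h l; rewrite /phi'; case: ifP => _ //; exact: iso_comp. Qed.

Lemma card_K' : #|{: K'}| = #|K|.-1.
Proof. by rewrite card_sig -(cardC1 k); apply: eq_card => x; rewrite !inE. Qed.

Lemma rho_surj y : exists x, rho x = y.
Proof.
exists (@finfun K (fun _ => H) (fun l => if l == k then 1 else y (insubd tk l))).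
apply/ffunP => l; rewrite rhoE !ffunE eqxx (hom1 (hphi _)) mulg1.
case: l => v nv /=; rewrite (negbTE nv).
by rewrite (_ : insubd tk v = exist _ v nv) ?if_same //; apply: val_inj; rewrite insubdK.
Qed.

Lemma rho_tw x y : twisted_conj (hmap tau phi) x y <->
  twisted_conj (hmap tau' phi') (rho x) (rho y).
Proof.
split.
- case=> g ->; exists (@finfun K' (fun _ => H) (fun l => g (val l))).
  apply/ffunP => l; rewrite !(rhoE, dpmulE, dpinvE, hmapE, ffunE) tau'E /phi'.
  case: ifP => [/eqP E|_] /=; last by [].
  have E' : tau (sval l) = k := E.
  rewrite E' !(hphi (sval l)) !(homV (hphi (sval l))) !mulgA.
  by rewrite mulgVK.
- case=> g' e.
  pose g := @finfun K (fun _ => H) (fun l => if l == k then y k * phi k (g' tk) * (x k)^-1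
                                     else g' (insubd tk l)).
  have gv (l : K') : g (val l) = g' l.
    rewrite ffunE; case: l => v nv /=; rewrite (negbTE nv).
    rewrite (_ : insubd tk v = exist _ v nv) //; apply: val_inj; by rewrite insubdK.
  have gk : g k = y k * phi k (g' tk) * (x k)^-1 by rewrite ffunE eqxx.
  have gtk : g (tau k) = g' tk by apply: (gv tk).
  exists g; apply/ffunP => l; rewrite !(dpmulE, dpinvE, hmapE).
  case: (eqVneq l k) => [->|nl].
    by rewrite gtk gk mulgVK mulgK.
  pose l' : K' := exist _ l nl.
  move/ffunP: e => /(_ l'); rewrite !(rhoE, dpmulE, dpinvE, hmapE) /phi' /=.
  have -> : g l = g' l' by apply: (gv l').
  case: ifP => [/eqP E|/negbT E].
  + have -> : tau' l' = tk by apply: val_inj; rewrite tau'E /= E eqxx.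
    move=> h; rewrite E gk; apply: (mulIg (phi l (y k))); rewrite h /=.
    rewrite !(hphi _) !(homV (hphi _)) !invgM !invgK !mulgA.
    by rewrite mulgVK.
  + have -> : tau' l' = exist _ (tau l) E by apply: val_inj; rewrite tau'E /= (negbTE E).
    by rewrite -(gv (exist _ (tau l) E)).
Qed.

Lemma rn_contract kk : reidemeister_number_is (hmap tau phi) kk <->
  reidemeister_number_is (hmap tau' phi') kk.
Proof. apply: (rn_transfer (f := rho)); [exact: rho_surj | exact: rho_tw]. Qed.
End Contract.

Lemma rn_reindex (K1 K2 : finType) (e : K1 -> K2) (tau1 : K1 -> K1) (phi1 : K1 -> H -> H)
  (tau2 : K2 -> K2) (phi2 : K2 -> H -> H) :
  bijective e -> (forall l, e (tau1 l) = tau2 (e l)) ->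
  (forall l a, phi1 l a = phi2 (e l) a) ->
  forall kk, reidemeister_number_is (hmap tau2 phi2) kk <->
             reidemeister_number_is (hmap tau1 phi1) kk.
Proof.
move=> [ei e1 e2] he hp.
pose th (x : hP K2) : hP K1 := @finfun K1 (fun _ => H) (fun l => x (e l)).
apply: (rn_conj (th := th)).
- split.
  + by move=> x y; apply/ffunP => l; rewrite !(ffunE, dpmulE).
  + exists (fun y : hP K1 => (@finfun K2 (fun _ => H) (fun l => y (ei l)) : hP K2)).
    * by move=> x; apply/ffunP => l; rewrite !ffunE e2.
    * by move=> x; apply/ffunP => l; rewrite !ffunE e1.
- by move=> x; apply/ffunP => l; rewrite !(ffunE, hmapE) he hp.
Qed.
End Homog.

Section HomogMain.
Variable H : groupType.

Lemma hom_forward : forall N (K : finType), #|K| = N ->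
  forall (tau : K -> K) (phi : K -> H -> H), injective tau ->
  (forall l, is_iso (phi l)) ->
  exists j, j <= #|K| /\ (0 < #|K| -> 0 < j) /\
    exists kk, set_pow (SpecR H) j kk /\ reidemeister_number_is (hmap tau phi) kk.
Proof.
elim=> [|N IH] K hK tau phi ti hphi.
all: case: (boolP [forall l, tau l == l]) => [/forallP fx|/forallPn [k nk]].
- have [kk [h1 h2]] := hmap_fixed hphi (fun l => eqP (fx l)).
  by exists #|K|; split => //; split => //; exists kk.
- exfalso; have : 0 < #|K| by apply/card_gt0P; exists k.
  by rewrite hK.
- have [kk [h1 h2]] := hmap_fixed hphi (fun l => eqP (fx l)).
  by exists #|K|; split => //; split => //; exists kk.
- have hp l : is_hom (phi l) by case: (hphi l).
  have cK : #|{: K' k}| = N by rewrite card_K' hK.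
  have [j [jle [jpos [kk [h1 h2]]]]] :=
    IH _ cK _ _ (@tau'_inj _ _ _ ti nk) (@phi'_iso H K tau phi k hphi).
  exists j; split; first by rewrite hK -cK ltnW.
  split.
    move=> _; apply: jpos; rewrite cK.
    have : 0 < #|{: K' k}| by apply/card_gt0P; exists (tk nk).
    by rewrite cK.
  exists kk; split => //; by apply/(rn_contract hp nk).
Qed.

Lemma hom_real (r : nat) : 0 < r -> forall j kk, 0 < j <= r ->
  set_pow (SpecR H) j kk ->
  exists (tau : 'I_r -> 'I_r) (phi : 'I_r -> H -> H), injective tau /\
    (forall l, is_iso (phi l)) /\ reidemeister_number_is (hmap tau phi) kk.
Proof.
elim: r => // r IH _ j kk /andP [j0 jr] hk.
case: (eqVneq j r.+1) => [ej|nj].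
- move: hk; rewrite ej => /set_pow_fun [f [Sf ->]].
  have ha t : {a : H -> H | is_aut a /\ reidemeister_number_is a (f t)}.
    by apply: cid; apply: Sf.
  pose al t := proj1_sig (ha t).
  exists id, al; split => //; split.
    by move=> t; rewrite /al; case: (ha t) => a [].
  have -> : hmap id al = prodmap (A := fun _ : 'I_r.+1 => H) al.
    apply: functional_extensionality => x; apply/ffunP => l.
    by rewrite hmapE /prodmap ?ffunE.
  apply: rn_prod => t; rewrite /al; case: (ha t) => a [[]] //.
have jr' : j <= r by rewrite -ltnS ltn_neqAle nj.
have r0 : 0 < r by apply: leq_trans j0 jr'.
have [to [po [toi [poi hr]]]] := IH r0 j kk (introT andP (conj j0 jr')) hk.
pose p0 : 'I_r := Ordinal r0.
pose tau (l : 'I_r.+1) : 'I_r.+1 :=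
  if unlift ord_max l is Some l' then (if l' == p0 then ord_max else lift ord_max (to l'))
  else lift ord_max (to p0).
pose phi (l : 'I_r.+1) : H -> H :=
  if unlift ord_max l is Some l' then (if l' == p0 then id else po l') else po p0.
have tauL l : tau (lift ord_max l) = if l == p0 then ord_max else lift ord_max (to l).
  by rewrite /tau liftK.
have phiL l : phi (lift ord_max l) = if l == p0 then id else po l.
  by rewrite /phi liftK.
have tauM : tau ord_max = lift ord_max (to p0) by rewrite /tau unlift_none.
have phiM : phi ord_max = po p0 by rewrite /phi unlift_none.
have nM (l : 'I_r) : lift ord_max l != ord_max :> 'I_r.+1 by rewrite eq_sym neq_lift.
have ti : injective tau.
  move=> a b.
  case: (unliftP ord_max a) => [a'|] ->; case: (unliftP ord_max b) => [b'|] -> //;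
    rewrite ?tauL ?tauM.
  - case: ifP => [/eqP ea|_]; case: ifP => [/eqP eb|_].
    + by rewrite ea eb.
    + by move=> e; move: (nM (to b')); rewrite -e eqxx.
    + by move=> e; move: (nM (to a')); rewrite e eqxx.
    + by move/lift_inj/toi ->.
  - case: ifP => [/eqP ea|/negbT na]; first by move=> e; move: (nM (to p0)); rewrite -e eqxx.
    by move/lift_inj/toi => e; rewrite e eqxx in na.
  - case: ifP => [/eqP eb|/negbT nb]; first by move=> e; move: (nM (to p0)); rewrite e eqxx.
    by move/lift_inj/toi => e; rewrite -e eqxx in nb.
have phii l : is_iso (phi l).
  case: (unliftP ord_max l) => [l'|] ->; rewrite ?phiL ?phiM //.
  by case: ifP => _ //; exact: iso_id.
exists tau, phi; split => //; split => //.
have nk : tau ord_max != ord_max by rewrite tauM nM.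
have hp l : is_hom (phi l) by case: (phii l).
apply/(rn_contract hp nk).
pose e (l : 'I_r) : K' ord_max := exist _ (lift ord_max l) (nM l).
have eb : bijective e.
  apply: inj_card_bij; first by move=> a b /(congr1 val) /lift_inj.
  by rewrite card_K' !card_ord.
apply/(rn_reindex (e := e) (tau1 := to) (phi1 := po)) => //.
- move=> l; apply: val_inj; rewrite tau'E /= tauL.
  case: (eqVneq l p0) => [->|nl]; first by rewrite eqxx tauM.
  by rewrite (negbTE (nM _)).
- move=> l a; rewrite /phi' /= tauL.
  case: (eqVneq l p0) => [->|nl]; first by rewrite eqxx phiM phiL eqxx.
  by rewrite (negbTE (nM _)) phiL (negbTE nl).
Qed.
End HomogMain.

Record gclosed (X : groupType) (P : pred X) : Prop := GClosed {
  gc1 : P one; gcM : forall a b, P a -> P b -> P (mul a b);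
  gcV : forall a, P a -> P (inv a) }.

Record sgrp (X : groupType) (P : pred X) (hc : gclosed P) : Type :=
  SG { sgv : X; sgp : P sgv }.
HB.instance Definition _ X P hc := [isSub for @sgv X P hc].
HB.instance Definition _ X P hc := [Choice of @sgrp X P hc by <:].

Section SG.
Variables (X : groupType) (P : pred X) (hc : gclosed P).
Definition sg_one : sgrp hc := SG hc (gc1 hc).
Definition sg_mul (a b : sgrp hc) : sgrp hc := SG hc (gcM hc (sgp a) (sgp b)).
Definition sg_inv (a : sgrp hc) : sgrp hc := SG hc (gcV hc (sgp a)).
Fact sg_mulA : associative sg_mul.
Proof. by move=> a b c; apply: val_inj; rewrite /= mulgA. Qed.
Fact sg_mul1 : left_id sg_one sg_mul.
Proof. by move=> a; apply: val_inj; rewrite /= mul1g. Qed.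
Fact sg_mulg1 : right_id sg_one sg_mul.
Proof. by move=> a; apply: val_inj; rewrite /= mulg1. Qed.
Fact sg_mulV : left_inverse sg_one sg_inv sg_mul.
Proof. by move=> a; apply: val_inj; rewrite /= mulVg. Qed.
Fact sg_mulgV : right_inverse sg_one sg_inv sg_mul.
Proof. by move=> a; apply: val_inj; rewrite /= mulgV. Qed.
End SG.

HB.instance Definition _ X P hc :=
  isGroup.Build (@sgrp X P hc) (@sg_mulA X P hc) (@sg_mul1 X P hc)
    (@sg_mulg1 X P hc) (@sg_mulV X P hc) (@sg_mulgV X P hc).

Section Split.
Local Open Scope group_scope.
Variables (X : groupType) (PA PB : X -> Prop).
Hypothesis hA : forall a b, PA a -> PA b -> PA (a * b^-1).
Hypothesis hA1 : PA 1.
Hypothesis hB : forall a b, PB a -> PB b -> PB (a * b^-1).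
Hypothesis hB1 : PB 1.
Hypothesis hcomm : forall a b, PA a -> PB b -> a * b = b * a.
Hypothesis hint : forall c, PA c -> PB c -> c = 1.
Hypothesis hgen : forall x, exists a b, PA a /\ PB b /\ x = a * b.

Lemma gclosed_of (Q : X -> Prop) : (forall a b, Q a -> Q b -> Q (a * b^-1)) -> Q 1 ->
  gclosed (pb Q).
Proof.
move=> h h1.
have hV a : Q a -> Q a^-1 by move=> qa; have := h _ _ h1 qa; rewrite mul1g.
split.
- by apply/pbP.
- move=> a b /pbP qa /pbP qb; apply/pbP.
  by have := h _ _ qa (hV _ qb); rewrite invgK.
- by move=> a /pbP qa; apply/pbP; apply: hV.
Qed.

Lemma decomp_unique a b a' b' : PA a -> PB b -> PA a' -> PB b' ->
  a * b = a' * b' -> a = a' /\ b = b'.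
Proof.
move=> pa pb pa' pb' e.
have e1 : a'^-1 * a = b' * b^-1.
  by rewrite -(mulgK b a) e -mulgA mulKg.
have hAl : PA (a'^-1 * a).
  have := hA hA1 pa'; rewrite mul1g => pv.
  by have := hA pv (hA hA1 pa); rewrite mul1g invgK.
have := hint hAl; rewrite e1 => h.
have c : b' * b^-1 = 1 by apply: h; apply: hB.
split.
- by apply: (mulgI a'^-1); rewrite mulVg e1 c.
- by apply/esym/divg1_eq.
Qed.

Lemma indec_split : directly_indecomposable X ->
  (forall a, PA a -> a = 1) \/ (forall b, PB b -> b = 1).
Proof.
move=> hind.
have cA := gclosed_of hA hA1; have cB := gclosed_of hB hB1.
have hd x : {ab : X * X | PA ab.1 /\ PB ab.2 /\ x = ab.1 * ab.2}.
  apply: cid; have [a [b [pa [pb e]]]] := hgen x; by exists (a, b).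
pose f (x : X) : gprod (sgrp cA) (sgrp cB) :=
  (SG cA ((pbP _ _).2 (proj1 (proj2_sig (hd x)))),
   SG cB ((pbP _ _).2 (proj1 (proj2 (proj2_sig (hd x)))))).
have fE x a b : PA a -> PB b -> x = a * b -> sgv (f x).1 = a /\ sgv (f x).2 = b.
  move=> pa pb e; rewrite /f /=; case: (hd x) => [[a' b']] [pa' [pb' e']] /=.
  apply: decomp_unique => //; by rewrite -e' -e.
have fhom : is_hom f.
  move=> x y.
  have [a [b [pa [pb ex]]]] := hgen x; have [a' [b' [pa' [pb' ey]]]] := hgen y.
  have exy : x * y = (a * a') * (b * b').
    by rewrite ex ey -!mulgA; congr (a * _); rewrite !mulgA (hcomm pa' pb).
  have pA2 : PA (a * a').
    have := hA hA1 pa'; rewrite mul1g => h; by have := hA pa h; rewrite invgK.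
  have pB2 : PB (b * b').
    have := hB hB1 pb'; rewrite mul1g => h; by have := hB pb h; rewrite invgK.
  have [e1 e2] := fE _ _ _ pA2 pB2 exy.
  have [e3 e4] := fE _ _ _ pa pb ex.
  have [e5 e6] := fE _ _ _ pa' pb' ey.
  case: (f (x * y)) e1 e2 => u v /= e1 e2.
  case: (f x) e3 e4 => u1 v1 /= e3 e4.
  case: (f y) e5 e6 => u2 v2 /= e5 e6.
  congr pair; apply: val_inj => /=.
  - by rewrite e1 e3 e5.
  - by rewrite e2 e4 e6.
have fbij : bijective f.
  exists (fun p => sgv p.1 * sgv p.2).
  - move=> x; rewrite /f /=; by case: (hd x) => [[a b]] [pa [pb e]] /=.
  - case=> u v; have pu := (pbP _ _).1 (sgp u); have pv := (pbP _ _).1 (sgp v).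
    have [e1 e2] := fE _ _ _ pu pv erefl.
    case: (f _) e1 e2 => u' v' /= e1 e2; congr pair; exact: val_inj.
have [tA|tB] := hind _ _ (ex_intro _ f (conj fhom fbij)).
- left=> a pa; have := tA (SG cA ((pbP _ _).2 pa)); by move/(congr1 (@sgv _ _ _)).
- right=> b pb; have := tB (SG cB ((pbP _ _).2 pb)); by move/(congr1 (@sgv _ _ _)).
Qed.
End Split.

Section Struct.
Local Open Scope group_scope.
Variables (I : finType) (F : I -> groupType).
Hypothesis hnt : forall i, ~ trivial_group (F i).
Hypothesis hcl : forall i, centreless (F i).
Hypothesis hind : forall i, directly_indecomposable (F i).
Arguments hnt : clear implicits.
Arguments hcl : clear implicits.
Arguments hind : clear implicits.
Variable psi : dprodG F -> dprodG F.
Hypothesis hpsi : is_aut psi.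

Let hp : is_hom psi. Proof. by case: hpsi. Qed.
Let psii : dprodG F -> dprodG F := proj1_sig (cid (let: conj _ (Bijective g h1 h2) := hpsi in ex_intro (fun g => cancel psi g /\ cancel g psi) g (conj h1 h2))).
Let pK : cancel psi psii.
Proof. by rewrite /psii; case: (cid _) => g []. Qed.
Let piK : cancel psii psi.
Proof. by rewrite /psii; case: (cid _) => g []. Qed.
Let pinj : injective psi. Proof. exact: can_inj pK. Qed.

Lemma psi1 : psi 1 = 1. Proof. exact: hom1 hp. Qed.

Lemma nontriv i : exists b : F i, b <> 1.
Proof.
apply: NNPP => h; apply: (hnt i) => b; apply: NNPP => nb; apply: h; by exists b.
Qed.

Section FixK.
Variable k : I.
Definition pe (a : F k) := psi (ein a).
Lemma pe_hom : is_hom pe.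
Proof. exact: hom_comp (@ein_hom _ _ k) hp. Qed.
Lemma pe_inj : injective pe.
Proof. by move=> a b /pinj /ein_inj. Qed.
Lemma pe1 : pe 1 = 1. Proof. exact: hom1 pe_hom. Qed.

Definition At l := forall a, pe a l = 1.
Definition Bt l := forall x : dprodG F, x k = 1 -> psi x l = 1.

Lemma split_k (x : dprodG F) : psi x = pe (x k) * psi ((ein (x k))^-1 * x)
  /\ ((ein (x k))^-1 * x) k = 1.
Proof.
split; first by rewrite /pe -hp mulVKg.
by rewrite dpmulE dpinvE ein_at mulVg.
Qed.

Lemma gen l (c : F l) : exists a (x : dprodG F), x k = 1 /\ c = pe a l * psi x l.
Proof.
pose x := psii (ein c); have [e1 e2] := split_k x.
exists (x k), ((ein (x k))^-1 * x); split => //.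
by rewrite -dpmulE -e1 /x piK ein_at.
Qed.

Lemma dich l : At l \/ Bt l.
Proof.
pose PA (c : F l) := exists a, pe a l = c.
pose PB (c : F l) := exists x : dprodG F, x k = 1 /\ psi x l = c.
have hA a b : PA a -> PA b -> PA (a * b^-1).
  case=> a0 <- [b0 <-]; exists (a0 * b0^-1).
  by rewrite pe_hom (homV pe_hom) dpmulE dpinvE.
have hA1 : PA 1 by exists 1; rewrite pe1 dponeE.
have hB a b : PB a -> PB b -> PB (a * b^-1).
  case=> x [xk <-] [y [yk <-]]; exists (x * y^-1); split.
    by rewrite dpmulE dpinvE xk yk invg1 mulg1.
  by rewrite hp (homV hp) dpmulE dpinvE.
have hB1 : PB 1 by exists 1; rewrite dponeE psi1 dponeE.
have hcomm a b : PA a -> PB b -> a * b = b * a.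
  case=> a0 <- [x [xk <-]]; rewrite -!dpmulE /pe -!hp; congr (psi _ l).
  apply/ffunP => m; rewrite !dpmulE.
  case: (eqVneq k m) => [<-|ne]; first by rewrite xk mulg1 mul1g.
  by rewrite ein_off // mulg1 mul1g.
have hgen x : exists a b, PA a /\ PB b /\ x = a * b.
  have [a [y [yk e]]] := gen x; exists (pe a l), (psi y l); split; first by exists a.
  split=> //; by exists y.
have hint c : PA c -> PB c -> c = 1.
  move=> pa pb; apply: (hcl l) => z.
  have [a [b [pa' [pb' ->]]]] := hgen z.
  by rewrite mulgA -(hcomm _ _ pa' pb) -!mulgA (hcomm _ _ pa pb').
have [h|h] := indec_split hA hA1 hB hB1 hcomm hint hgen (hind l).
- by left=> a; apply: h; exists a.
- by right=> x xk; apply: h; exists x.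
Qed.

Lemma notboth l : At l -> Bt l -> False.
Proof.
move=> ha hb; apply: (hnt l) => c.
have [a [x [xk ->]]] := gen c; by rewrite ha hb // mulg1.
Qed.

Lemma exB : exists l, Bt l.
Proof.
apply: NNPP => h; apply: (hnt k) => a.
have hA l : At l by case: (dich l) => // hb; case: h; exists l.
apply: pe_inj; rewrite pe1; apply/ffunP => l; by rewrite hA dponeE.
Qed.

Lemma supp (y : dprodG F) : (forall l, At l -> y l = 1) -> exists a, pe a = y.
Proof.
move=> hy; pose x := psii y; have [e1 e2] := split_k x.
exists (x k).
have h1 : psi ((ein (x k))^-1 * x) = 1.
  apply/ffunP => l; rewrite dponeE; case: (dich l) => [ha|hb]; last exact: hb.
  move: (e1) => /ffunP /(_ l); rewrite dpmulE ha mul1g /x piK => <-.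
  by apply: hy.
by move: e1; rewrite h1 mulg1 /x piK.
Qed.

Lemma uniqB l1 l2 : Bt l1 -> Bt l2 -> l1 = l2.
Proof.
move=> b1 b2; apply: NNPP => ne.
pose U (a : F k) := forall l, l != l1 -> pe a l = 1.
pose V (a : F k) := pe a l1 = 1.
have peM a b l : pe (a * b^-1) l = pe a l * (pe b l)^-1.
  by rewrite pe_hom (homV pe_hom) dpmulE dpinvE.
have hA a b : U a -> U b -> U (a * b^-1).
  by move=> ua ub l nl; rewrite peM ua // ub // invg1 mulg1.
have hA1 : U 1 by move=> l _; rewrite pe1 dponeE.
have hB a b : V a -> V b -> V (a * b^-1).
  by move=> va vb; rewrite /V peM va vb invg1 mulg1.
have hB1 : V 1 by rewrite /V pe1 dponeE.
have hcomm a b : U a -> V b -> a * b = b * a.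
  move=> ua vb; apply: pe_inj; rewrite !pe_hom; apply/ffunP => l; rewrite !dpmulE.
  case: (eqVneq l l1) => [->|nl]; first by rewrite vb mulg1 mul1g.
  by rewrite ua // mulg1 mul1g.
have hint c : U c -> V c -> c = 1.
  move=> uc vc; apply: pe_inj; rewrite pe1; apply/ffunP => l; rewrite dponeE.
  by case: (eqVneq l l1) => [->|nl] //; apply: uc.
have nA1 : ~ At l1 by move=> ha; exact: notboth ha b1.
have nA2 : ~ At l2 by move=> ha; exact: notboth ha b2.
have hgen a : exists u v, U u /\ V v /\ a = u * v.
  pose y := pe a.
  pose y1 := @finfun I F (fun l => if l == l1 then y l else 1).
  pose y2 := @finfun I F (fun l => if l == l1 then 1 else y l).
  have [u hu] : exists u, pe u = y1.
    apply: supp => l ha; rewrite ffunE; case: eqP => // e; by rewrite e in ha.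
  have [v hv] : exists v, pe v = y2.
    apply: supp => l ha; rewrite ffunE; case: eqP => // _; exact: ha.
  exists u, v; split; first by move=> l nl; rewrite hu ffunE (negbTE nl).
  split; first by rewrite /V hv ffunE eqxx.
  apply: pe_inj; rewrite pe_hom hu hv; apply/ffunP => l; rewrite dpmulE !ffunE.
  by case: eqP => _; rewrite ?mulg1 ?mul1g.
have [h|h] := indec_split hA hA1 hB hB1 hcomm hint hgen (hind k).
- have [b nb] := nontriv l1.
  have [u hu] : exists u, pe u = ein b.
    apply: supp => l ha; case: (eqVneq l1 l) => [e|nl]; first by rewrite -e in ha.
    by rewrite ein_off.
  have u1 : u = 1 by apply: h => l nl; rewrite hu ein_off // eq_sym.
  by apply: nb; rewrite -(ein_at b) -hu u1 pe1 dponeE.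
- have [b nb] := nontriv l2.
  have [v hv] : exists v, pe v = ein b.
    apply: supp => l ha; case: (eqVneq l2 l) => [e|nl]; first by rewrite -e in ha.
    by rewrite ein_off.
  have v1 : v = 1.
    apply: h; rewrite /V hv ein_off //; apply/eqP => e; apply: ne; by rewrite e.
  by apply: nb; rewrite -(ein_at b) -hv v1 pe1 dponeE.
Qed.
End FixK.

Definition sig_ (k : I) : I := proj1_sig (cid (exB k)).
Lemma sigB k : Bt k (sig_ k).
Proof. by rewrite /sig_; case: (cid _). Qed.
Lemma sigA k l : l != sig_ k -> At k l.
Proof.
move=> nl; case: (dich k l) => // hb; case/eqP: nl; exact: uniqB hb (@sigB k).
Qed.

Lemma sig_inj : injective sig_.
Proof.
move=> k1 k2 e; apply: NNPP => ne; apply: (hnt k2) => b.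
apply: (@pe_inj k2); rewrite pe1; apply/ffunP => l; rewrite dponeE.
case: (eqVneq l (sig_ k2)) => [->|nl]; last exact: sigA.
rewrite -e; apply: sigB; rewrite ein_off //; apply/eqP => e'; apply: ne; by rewrite e'.
Qed.

Lemma sig_formula k x : psi x (sig_ k) = pe (x k) (sig_ k).
Proof.
have [e1 e2] := split_k k x; by rewrite e1 dpmulE (sigB e2) mulg1.
Qed.

Lemma theta_iso k : is_iso (fun a : F k => pe a (sig_ k)).
Proof.
split.
  by move=> a b /=; rewrite pe_hom dpmulE.
have supp1 (a : F k) : ein (pe a (sig_ k)) = pe a.
  apply/ffunP => l; case: (eqVneq (sig_ k) l) => [<-|nl]; first by rewrite ein_at.
  have h : At k l by apply: sigA; rewrite eq_sym.
  by rewrite ein_off // (h a).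
exists (fun c => psii (ein c) k).
- by move=> a /=; rewrite supp1 /pe pK ein_at.
- by move=> c /=; rewrite -sig_formula piK ein_at.
Qed.

Lemma struct_main : exists tau : I -> I, injective tau /\ forall l,
  is_iso (fun a : F (tau l) => psi (ein a) l) /\
  forall x, psi x l = psi (ein (x (tau l))) l.
Proof.
have [tau s1 s2] := injF_bij sig_inj.
exists tau; split; first exact: can_inj s2.
move=> l; split.
- have := theta_iso (tau l); rewrite /pe s2; done.
- move=> x; have := sig_formula (tau l) x; rewrite /pe s2; done.
Qed.
End Struct.

Lemma iso_inv (A B : groupType) (f : A -> B) (g : B -> A) :
  is_iso f -> cancel f g -> cancel g f -> is_iso g.
Proof.
move=> [hf _] c1 c2; split; last by exists f.
move=> x y; apply: (can_inj c1); by rewrite hf !c2.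
Qed.

Lemma bsp_of (I : eqType) (s : seq I) (Fs : I -> enat_set) (f : I -> enat) :
  (forall i, i \in s -> Fs i (f i)) -> big_set_prod s Fs (emul_list s f).
Proof.
elim: s => [|a s IH] h //=.
exists (f a), (emul_list s f); split; first by apply: h; rewrite inE eqxx.
split=> //; apply: IH => i hi; apply: h; by rewrite inE hi orbT.
Qed.

Lemma bsp_to (I : eqType) (s : seq I) (Fs : I -> enat_set) k : uniq s ->
  big_set_prod s Fs k -> exists f, (forall i, i \in s -> Fs i (f i)) /\ k = emul_list s f.
Proof.
elim: s k => [|a s IH] k /=.
  by move=> _ ->; exists (fun _ => Fin 1).
case/andP=> nas us [x [y [hx [hy ->]]]].
have [f [hf ->]] := IH _ us hy.
exists (fun i => if i == a then x else f i); split.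
  move=> i; rewrite inE; case: eqP => [-> _|_ /= hi] //; exact: hf.
rewrite eqxx; congr enat_mul; rewrite /emul_list.
elim: s nas {IH us hy hf} => //= b s IHs.
rewrite inE negb_or => /andP [nab nbs]; rewrite eq_sym (negbTE nab) IHs //.
Qed.

Section Main.
Variables (n : nat) (G : 'I_n -> groupType) (r : 'I_n -> nat).
Hypothesis hnt : forall i, ~ trivial_group (G i).
Hypothesis hiso : forall i j, i != j -> ~ isomorphic (G i) (G j).
Hypothesis hcl : forall i, centreless (G i).
Hypothesis hind : forall i, directly_indecomposable (G i).
Hypothesis hr : forall i, 0 < r i.
Arguments hnt : clear implicits.
Arguments hcl : clear implicits.
Arguments hind : clear implicits.
Arguments hr : clear implicits.

Definition KK := {i : 'I_n & 'I_(r i)}.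
Definition FF (k : KK) : groupType := G (tag k).
Definition blockG (i : 'I_n) : groupType := dprodG (fun _ : 'I_(r i) => G i).
Definition PP : groupType := powprodG G r.

Definition th (x : PP) : dprodG blockG :=
  @finfun 'I_n blockG (fun i => (@finfun 'I_(r i) (fun _ => G i)
     (fun j => x (Tagged (fun i => 'I_(r i)) j)) : blockG i)).
Definition thi (y : dprodG blockG) : PP :=
  @finfun KK FF (fun k => y (tag k) (tagged k)).

Lemma thE x i j : th x i j = x (Tagged (fun i => 'I_(r i)) j).
Proof. by rewrite /th !ffunE. Qed.

Lemma th_iso : is_iso th.
Proof.
split.
  by move=> x y; apply/ffunP => i; apply/ffunP => j; rewrite !(dpmulE, thE).
exists thi.
- by move=> x; apply/ffunP => -[i j]; rewrite /thi ffunE thE.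
- by move=> y; apply/ffunP => i; apply/ffunP => j; rewrite thE /thi ffunE.
Qed.
Lemma thK : cancel th thi.
Proof. by move=> x; apply/ffunP => -[i j]; rewrite /thi ffunE thE. Qed.
Lemma thiK : cancel thi th.
Proof. by move=> y; apply/ffunP => i; apply/ffunP => j; rewrite thE /thi ffunE. Qed.

Definition BLK (i : 'I_n) : enat_set :=
  fun k' => exists2 j, 1 <= j <= r i & set_pow (SpecR (G i)) j k'.

Lemma forward k : SpecR PP k -> exists f, (forall i, BLK i (f i)) /\ k = emul_list (enum 'I_n) f.
Proof.
case=> psi [hpsi hk].
have [tau [ti ht]] := @struct_main KK FF (fun k => hnt (tag k)) (fun k => hcl (tag k))
   (fun k => hind (tag k)) psi hpsi.
have tagE l : tag (tau l) = tag l.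
  apply: NNPP => ne; have [hi _] := ht l.
  apply: (hiso (i := tag (tau l)) (j := tag l)); first by apply/eqP.
  by exists (fun a : FF (tau l) => psi (ein a) l).
have Ht i (j : 'I_(r i)) : {t : 'I_(r i) | tau (Tagged (fun i => 'I_(r i)) j) = Tagged _ t}.
  move: (tagE (Tagged (fun i => 'I_(r i)) j)).
  case: (tau _) => i' t /= e; move: t; rewrite e => t; by exists t.
pose taub i j := proj1_sig (Ht i j).
have taubE i j : tau (Tagged (fun i => 'I_(r i)) j) = Tagged _ (taub i j).
  by rewrite /taub; case: (Ht i j).
pose phib i j (a : G i) : G i :=
  psi (@ein KK FF (Tagged (fun i => 'I_(r i)) (taub i j)) a) (Tagged (fun i => 'I_(r i)) j).
have phib_iso i j : is_iso (phib i j).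
  have [h _] := ht (Tagged (fun i => 'I_(r i)) j); move: h; rewrite taubE; done.
have formula x i j : psi x (Tagged (fun i => 'I_(r i)) j) =
    phib i j (x (Tagged (fun i => 'I_(r i)) (taub i j))).
  have [_ h] := ht (Tagged (fun i => 'I_(r i)) j); rewrite h taubE; done.
have taubi i : injective (taub i).
  move=> j1 j2 e.
  have : tau (Tagged (fun i => 'I_(r i)) j1) = tau (Tagged (fun i => 'I_(r i)) j2)
    by rewrite !taubE e.
  move/ti/(congr1 (fun k : KK => nat_of_ord (tagged k))) => /= e'; exact: val_inj.
pose Psi i := hmap (taub i) (phib i).
have eqv : forall kk, reidemeister_number_is psi kk <->
    reidemeister_number_is (prodmap Psi) kk.
  apply: (rn_conj th_iso) => x; apply/ffunP => i; apply/ffunP => j.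
  by rewrite thE /prodmap ffunE /Psi hmapE thE formula.
have hb i : {kk : enat | BLK i kk /\ reidemeister_number_is (Psi i) kk}.
  apply: cid.
  have [j [jle [jpos [kk [h1 h2]]]]] := hom_forward (erefl _) (taubi i) (phib_iso i).
  exists kk; split => //; exists j => //; rewrite card_ord in jle jpos.
  by rewrite jle andbT; apply: jpos.
pose f i := proj1_sig (hb i).
exists f; split; first by move=> i; rewrite /f; case: (hb i) => kk [].
have hf : reidemeister_number_is (prodmap Psi) (emul_list (enum 'I_n) f).
  apply: rn_prod => i.
    by apply: hmap_hom => j; case: (phib_iso i j).
  by rewrite /f; case: (hb i) => kk [].
by apply: (rn_unique hk); apply/eqv.
Qed.

Lemma backward k : (exists f, (forall i, BLK i (f i)) /\ k = emul_list (enum 'I_n) f) ->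
  SpecR PP k.
Proof.
case=> f [hf ->].
have hd i : {d : prod ('I_(r i) -> 'I_(r i)) ('I_(r i) -> G i -> G i) |
   injective d.1 /\ (forall l, is_iso (d.2 l)) /\
   reidemeister_number_is (hmap d.1 d.2) (f i)}.
  apply: cid; have [j hj hs] := hf i.
  have [tau [phi [h1 [h2 h3]]]] := hom_real (hr i) hj hs.
  by exists (tau, phi).
pose Psi i := hmap (proj1_sig (hd i)).1 (proj1_sig (hd i)).2.
have Psi_iso i : is_iso (Psi i).
  rewrite /Psi; case: (hd i) => d [h1 [h2 h3]] /=; exact: hmap_iso.
have Psi_rn i : reidemeister_number_is (Psi i) (f i).
  by rewrite /Psi; case: (hd i) => d [h1 [h2 h3]].
pose psi := thi \o prodmap Psi \o th.
exists psi; split.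
  apply: iso_comp; first exact: th_iso.
  apply: iso_comp; first exact: prodmap_iso.
  exact: iso_inv th_iso thK thiK.
apply/(rn_conj th_iso (chi := prodmap Psi)).
  by move=> x; rewrite /psi /= thiK.
apply: rn_prod => // i; by case: (Psi_iso i).
Qed.

Lemma spec_eq k : SpecR PP k <-> big_set_prod (enum 'I_n) BLK k.
Proof.
split.
- by case/forward=> f [hf ->]; apply: bsp_of => i _; apply: hf.
- move/(bsp_to (enum_uniq _)) => [f [hf ->]]; apply: backward.
  by exists f; split => // i; apply: hf; rewrite mem_enum.
Qed.
End Main.

Unset Implicit Arguments.

Theorem mainTheorem16 (n : nat) (G : 'I_n -> groupType) (r : 'I_n -> nat) :
  (forall i, ~ trivial_group (G i)) ->
  (forall i j, i != j -> ~ isomorphic (G i) (G j)) ->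
  (forall i, centreless (G i)) ->
  (forall i, directly_indecomposable (G i)) ->
  (forall i, 0 < r i) ->
  (forall k : enat,
     SpecR (powprodG G r) k <->
     big_set_prod (enum 'I_n)
       (fun i k' => exists2 j, 1 <= j <= r i & set_pow (SpecR (G i)) j k') k)
  /\
  (R_infinity (powprodG G r) <-> exists i, R_infinity (G i)).
Proof.
move=> hnt hiso hcl hind hr.
have SE := spec_eq hnt hiso hcl hind hr.
split; first exact: SE.
split.
- move=> hinf; apply: NNPP => hno.
  have hm i : {m : nat | SpecR (G i) (Fin m)}.
    apply: cid; apply: NNPP => hnm; apply: hno; exists i => kk; split.
    + case: kk => [m|] // hs; by case: hnm; exists m.
    + move=> ->; have [k0 h0] := rn_exists (@id (G i)); case: k0 h0 => [m|] h0.
        by exfalso; apply: hnm; exists m; exists id; split => //; exact: iso_id.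
      by exists id; split => //; exact: iso_id.
  pose f i := Fin (proj1_sig (hm i) * 1).
  have : SpecR (PP G r) (emul_list (enum 'I_n) f).
    apply/SE; apply: bsp_of => i _; exists 1; first by rewrite /= hr.
    exists (Fin (proj1_sig (hm i))), (Fin 1); split; first by case: (hm i).
    by split.
  move/(hinf _).1; by rewrite /f emul_list_Fin.
- case=> i0 hi0.
  have dir1 kk : SpecR (powprodG G r) kk -> kk = Inf.
    move/SE/(bsp_to (enum_uniq _)) => [f [hf ->]].
    apply: (emul_list_Inf (i0:=i0)); first by rewrite mem_enum.
    have [j /andP [j1 _] hs] := hf i0 (mem_enum _ i0).
    case: j j1 hs => // j _ [a [b [ha [_ ->]]]].
    by have -> := (hi0 a).1 ha.
  move=> kk; split; first exact: dir1.
  move=> ->; have [k0 h0] := rn_exists (@id (powprodG G r)).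
  have s0 : SpecR (powprodG G r) k0 by exists id; split => //; exact: iso_id.
  by rewrite -(dir1 _ s0).
Qed.
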